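(* Let $n,d$ be integers with $1\le d<n$ and set $\bar k_i=\lfloor i(n+1)/(d+1)\rfloor$ for $i=1,\dots,d$. Then for $\bar\lambda_d=\binom{\bar k_d}{d}+\binom{\bar k_{d-1}}{d-1}+\cdots+\binom{\bar k_1}{1}$ we have $\delta_{n,d}(\bar\lambda_d)=\max_{0\le\lambda\le\binom nd}\delta_{n,d}(\lambda)$.
   Context: For integers $\lambda\ge0$ and $d\ge1$, $\lambda$ has a unique expansion $\lambda=\binom{k_d}{d}+\binom{k_{d-1}}{d-1}+\cdots+\binom{k_1}{1}$ with $k_d>k_{d-1}>\cdots>k_1\ge0$; define $\lambda^{[d]}=\binom{k_d}{d+1}+\binom{k_{d-1}}{d}+\cdots+\binom{k_1}{2}$. For $0\le\lambda\le\binom nd$ define $\delta_{n,d}(\lambda)=\frac{\lambda}{\binom nd}-\frac{\lambda^{[d]}}{\binom n{d+1}}$ (the difference between the linear bound and the Kruskal–Katona bound). *)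

(* Defs.v *)
From mathcomp Require Import all_boot all_order all_algebra.
Set Implicit Arguments. Unset Strict Implicit. Unset Printing Implicit Defensive.
Import Order.TTheory GRing.Theory Num.Theory.

(* A d-cascade (Macaulay) expansion of lam: a function k (only the values
   k 1, ..., k d matter) with k d > k (d-1) > ... > k 1 (>= 0) and
   lam = C(k d, d) + ... + C(k 1, 1). *)
Definition is_cascade (d lam : nat) (k : nat -> nat) : Prop :=
  (forall i, (1 <= i)%N -> (i < d)%N -> (k i < k i.+1)%N) /\
  lam = (\sum_(1 <= i < d.+1) 'C(k i, i))%N.

Definition kk_shadow (d : nat) (k : nat -> nat) : nat :=
  (\sum_(1 <= i < d.+1) 'C(k i, i.+1))%N.

(* delta_{n,d}(lam) = lam / C(n,d) - lam^[d] / C(n,d+1), where k is the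
   cascade expansion of lam (unique, so this is well defined). *)
Definition delta (n d lam : nat) (k : nat -> nat) : rat :=
  (lam%:R / ('C(n, d))%:R - (kk_shadow d k)%:R / ('C(n, d.+1))%:R)%R.

(* Main.v *)
Require Import Defs.
From mathcomp Require Import all_boot all_order all_algebra.
From mathcomp Require Import zify ring lra.
Import Order.TTheory GRing.Theory Num.Theory.

Local Open Scope ring_scope.

Definition G (n d i k : nat) : rat :=
  (n - d)%N%:R * ('C(k, i))%:R - (d.+1)%:R * ('C(k, i.+1))%:R.

Lemma unimodal (f : nat -> rat) (K : nat) :
  (forall k, (k < K)%N -> f k <= f k.+1) ->
  (forall k, (K <= k)%N -> f k.+1 <= f k) -> forall k, f k <= f K.
Proof.
move=> Hup Hdn.
have H1 : forall m, f (K - m)%N <= f K.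
  elim=> [|m IH]; first by rewrite subn0.
  case: (ltnP m K) => hm.
    apply: le_trans IH.
    have -> : (K - m)%N = (K - m.+1).+1 by lia.
    apply: Hup; lia.
  by have -> : (K - m.+1)%N = (K - m)%N by lia.
have H2 : forall m, f (K + m)%N <= f K.
  elim=> [|m IH]; first by rewrite addn0.
  apply: le_trans IH; rewrite addnS; apply: Hdn; lia.
move=> k; case: (leqP k K) => hk.
  by have := H1 (K - k)%N; rewrite subKn.
by have := H2 (k - K)%N; rewrite subnKC // ltnW.
Qed.

Lemma Gmax n d j k : (d < n)%N ->
  G n d j.+1 k <= G n d j.+1 (j.+1 * n.+1 %/ d.+1).
Proof.
move=> hdn; set K := (j.+1 * n.+1 %/ d.+1)%N.
have hK1 : (K * d.+1 <= j.+1 * n.+1)%N by apply: leq_divM.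
have hK2 : (j.+1 * n.+1 < K.+1 * d.+1)%N by apply: ltn_ceil.
have Hm := mul_bin_left.
apply: (@unimodal (G n d j.+1)) => m hm; rewrite /G !binS !natrD.
- have : (d.+1 * 'C(m, j.+1) <= (n - d) * 'C(m, j))%N.
    rewrite -(leq_pmul2l (ltn0Sn j)) mulnCA Hm mulnCA.
    rewrite mulnA [X in (_ <= X)%N]mulnA leq_mul2r; apply/orP; right.
    case: (ltnP m j) => hmj; first by nia.
    nia.
  rewrite -(ler_nat rat) !natrM => h; lra.
- have : ((n - d) * 'C(m, j) <= d.+1 * 'C(m, j.+1))%N.
    rewrite -(leq_pmul2l (ltn0Sn j)) [X in (_ <= X)%N]mulnCA Hm mulnCA.
    rewrite mulnA [X in (_ <= X)%N]mulnA leq_mul2r; apply/orP; right.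
    nia.
  rewrite -(ler_nat rat) !natrM => h; lra.
Qed.

Lemma cascade_lt d (k : nat -> nat) :
  (forall i, (1 <= i)%N -> (i < d)%N -> (k i < k i.+1)%N) ->
  (\sum_(1 <= i < d.+1) 'C(k i, i) < 'C((k d).+1, d))%N.
Proof.
elim: d => [|d IH] H; first by rewrite big_geq.
rewrite big_nat_recr //= binS.
have IH' := IH (fun i h1 h2 => H i h1 (ltnW h2)).
have : ('C((k d).+1, d) <= 'C(k d.+1, d))%N.
  case: d {IH IH'} H => [|d] H; first by rewrite !bin0.
  by apply: leq_bin2l; apply: H.
lia.
Qed.

Lemma delta_mul n d lam k : (d < n)%N -> is_cascade d lam k ->
  delta n d lam k * ((n - d)%N%:R * ('C(n, d))%:R) =
  \sum_(1 <= i < d.+1) G n d i (k i).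
Proof.
move=> hdn [_ ->].
rewrite /G sumrB -!mulr_sumr -!natr_sum /delta -/(kk_shadow d k).
have e : (n - d)%N%:R * ('C(n, d))%:R = (d.+1)%:R * ('C(n, d.+1))%:R :> rat.
  by rewrite -!natrM mul_bin_left.
have h1 : ('C(n, d))%:R != 0 :> rat by rewrite pnatr_eq0 -lt0n bin_gt0 ltnW.
have h2 : ('C(n, d.+1))%:R != 0 :> rat by rewrite pnatr_eq0 -lt0n bin_gt0.
rewrite mulrBl; congr (_ - _); first by field.
by rewrite e; field.
Qed.

Theorem proposition5p3 (n d : nat) :
  (1 <= d)%N -> (d < n)%N ->
  let kbar := fun i : nat => (i * n.+1 %/ d.+1)%N in
  let lbar := (\sum_(1 <= i < d.+1) 'C(kbar i, i))%N in
  is_cascade d lbar kbar /\ (lbar <= 'C(n, d))%N /\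
  forall (lam : nat) (k : nat -> nat),
    (lam <= 'C(n, d))%N -> is_cascade d lam k ->
    (delta n d lam k <= delta n d lbar kbar)%R.
Proof.
move=> hd hdn kbar lbar.
have hinc : forall i, (1 <= i)%N -> (i < d)%N -> (kbar i < kbar i.+1)%N.
  move=> i _ _; rewrite /kbar.
  set q1 := (i * n.+1 %/ d.+1)%N; set q2 := (i.+1 * n.+1 %/ d.+1)%N.
  have a1 : (q1 * d.+1 <= i * n.+1)%N by apply: leq_divM.
  have a2 : (i.+1 * n.+1 < q2.+1 * d.+1)%N by apply: ltn_ceil.
  rewrite -(ltn_pmul2r (ltn0Sn d)); nia.
have hcas : is_cascade d lbar kbar by split.
split; first exact: hcas.
split.
  apply: ltnW; have := @cascade_lt d kbar hinc; move/leq_trans; apply.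
  apply: leq_bin2l; rewrite /kbar.
  have a1 : ((d * n.+1 %/ d.+1) * d.+1 <= d * n.+1)%N by apply: leq_divM.
  nia.
move=> lam k _ hk.
have hP : 0 < (n - d)%N%:R * ('C(n, d))%:R :> rat.
  by rewrite mulr_gt0 // ltr0n ?subn_gt0 // bin_gt0 ltnW.
rewrite -(ler_pM2r hP) !delta_mul //.
apply: ler_sum_nat => i /andP [hi _].
case: i hi => [//|j] _; exact: Gmax.
Qed.
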